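(* Let $r_1<r_2$ be positive rational numbers such that neither $r_1$ nor $r_2$ is an integer and the open interval $(r_1,r_2)$ contains no integer. Let $w:=\lfloor r_1\rfloor$, $\epsilon_1:=r_1-w$, $\epsilon_2:=r_2-w$ (so $0<\epsilon_1<\epsilon_2<1$). Let $$d^*:=\min\{d\in\mathbb{Z}_{\ge1}:\ \exists m\in\mathbb{Z},\ r_1<m/d<r_2\},\qquad d_1:=\min\{e\in\mathbb{Z}_{\ge1}:\ (e/\epsilon_2,\,e/\epsilon_1)\cap\mathbb{Z}\neq\emptyset\}.$$ Then both minima exist, $d_1$ is the smallest positive integer denominator of a rational number in the interval $(1/\epsilon_2,1/\epsilon_1)$, and $$d^*=\left\lfloor \frac{d_1}{\epsilon_2}\right\rfloor+1,$$ i.e. $d^*=\lceil d_1/\epsilon_2\rceil$ if $d_1/\epsilon_2\notin\mathbb{Z}$ and $d^*=d_1/\epsilon_2+1$ if $d_1/\epsilon_2\in\mathbb{Z}$. *)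

(* Defs.v *)
From HB Require Import structures.
From mathcomp Require Import all_boot all_order all_algebra.
Set Implicit Arguments. Unset Strict Implicit. Unset Printing Implicit Defensive.
Import Order.TTheory GRing.Theory Num.Theory.
Local Open Scope ring_scope.

Definition is_min_pos (P : nat -> Prop) (d : nat) : Prop :=
  (0 < d)%N /\ P d /\ forall e : nat, (0 < e)%N -> P e -> (d <= e)%N.

Definition has_frac_with_den (a b : rat) (d : nat) : Prop :=
  exists m : int, a < m%:~R / d%:R /\ m%:~R / d%:R < b.

Definition scaled_interval_has_int (eps1 eps2 : rat) (e : nat) : Prop :=
  exists n : int, e%:R / eps2 < n%:~R /\ n%:~R < e%:R / eps1.

(* Main.v *)
Require Import Defs.
From HB Require Import structures.
From mathcomp Require Import all_boot all_order all_algebra.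
From Stdlib Require Import Classical.
From mathcomp Require Import lra.
Import Order.TTheory GRing.Theory Num.Theory.
Local Open Scope ring_scope.

Lemma min_exists (P : nat -> Prop) :
  (exists d, (0 < d)%N /\ P d) -> exists d, is_min_pos P d.
Proof.
move=> [d [d0 Pd]].
suff H : forall n d, (d <= n)%N -> (0 < d)%N -> P d -> exists d, is_min_pos P d.
  exact: (H d d).
elim=> [|n IH] {d0 Pd}d hd d0 Pd; first by rewrite leqn0 in hd; move/eqP: hd d0 => ->.
case: (classic (exists e, (0 < e)%N /\ P e /\ (e < d)%N)).
  move=> [e [e0 [Pe ed]]]; apply: (IH e) => //.
  by rewrite -ltnS (leq_trans ed hd).
move=> Hn; exists d; split=> //; split=> // e e0 Pe.
rewrite leqNgt; apply/negP => ed; apply: Hn; exists e; tauto.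
Qed.

Lemma frac_iff (a b : rat) (d : nat) : (0 < d)%N ->
  has_frac_with_den a b d <-> exists m : int, a * d%:R < m%:~R /\ m%:~R < b * d%:R.
Proof.
move=> d0; have dp : 0 < (d%:R : rat) by rewrite ltr0n.
rewrite /has_frac_with_den; split=> [[m [h1 h2]]|[m [h1 h2]]]; exists m.
  by split; [rewrite -ltr_pdivlMr | rewrite -ltr_pdivrMr].
by split; [rewrite ltr_pdivlMr | rewrite ltr_pdivrMr].
Qed.

Lemma scaled_iff (eps1 eps2 : rat) (e : nat) : 0 < eps1 -> 0 < eps2 ->
  scaled_interval_has_int eps1 eps2 e <->
  exists n : int, n%:~R * eps1 < e%:R /\ (e%:R : rat) < n%:~R * eps2.
Proof.
move=> p1 p2; rewrite /scaled_interval_has_int; split=> [[n [h1 h2]]|[n [h1 h2]]]; exists n.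
  by split; [rewrite -ltr_pdivlMr | rewrite -ltr_pdivrMr].
by split; [rewrite ltr_pdivrMr | rewrite ltr_pdivlMr].
Qed.

Lemma inv_iff (eps1 eps2 : rat) (e : nat) : (0 < e)%N -> 0 < eps1 -> 0 < eps2 ->
  has_frac_with_den (1 / eps2) (1 / eps1) e <-> scaled_interval_has_int eps1 eps2 e.
Proof.
move=> e0 p1 p2; rewrite frac_iff // scaled_iff //.
have ep : 0 < (e%:R : rat) by rewrite ltr0n.
split=> [[m [h1 h2]]|[m [h1 h2]]]; exists m.
  move: h1 h2; rewrite !mul1r ![_^-1 * _]mulrC -!/(_ / _).
  by rewrite ltr_pdivrMr // ltr_pdivlMr.
rewrite !mul1r ![_^-1 * _]mulrC -!/(_ / _).
by split; [rewrite ltr_pdivrMr | rewrite ltr_pdivlMr].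
Qed.
Theorem mainTheorem5 (r1 r2 : rat)
  (hr1 : 0 < r1) (hr12 : r1 < r2)
  (hr1nint : r1 \isn't a Num.int) (hr2nint : r2 \isn't a Num.int)
  (hnoint : forall z : int, ~ (r1 < z%:~R /\ z%:~R < r2)) :
  let w : int := Num.floor r1 in
  let eps1 : rat := r1 - w%:~R in
  let eps2 : rat := r2 - w%:~R in
  exists dstar d1 : nat,
    is_min_pos (has_frac_with_den r1 r2) dstar /\
    is_min_pos (scaled_interval_has_int eps1 eps2) d1 /\
    is_min_pos (has_frac_with_den (1 / eps2) (1 / eps1)) d1 /\
    (dstar%:R : int) = Num.floor (d1%:R / eps2) + 1.
Proof.
move=> w eps1 eps2.
have hw : (w%:~R : rat) < r1.
  rewrite lt_neqAle floor_le andbT; apply: contra hr1nint.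
  by rewrite intrEfloor.
have e1p : 0 < eps1 by rewrite /eps1; lra.
have e12 : eps1 < eps2 by rewrite /eps1 /eps2; lra.
have e2p : 0 < eps2 by lra.
have HP : forall d : nat, (0 < d)%N -> has_frac_with_den r1 r2 d <->
   exists m : int, eps1 * d%:R < m%:~R /\ m%:~R < eps2 * d%:R.
  move=> d d0; rewrite frac_iff //.
  have E : forall m : int, (m - w * d%:Z)%:~R = m%:~R - w%:~R * (d%:R : rat).
    by move=> m; rewrite rmorphB rmorphM.
  split=> [[m [h1 h2]]|[m [h1 h2]]].
    exists (m - w * d%:Z); rewrite E /eps1 /eps2 !mulrBl; split; lra.
  exists (m + w * d%:Z); rewrite rmorphD rmorphM /=.
  move: h1 h2; rewrite /eps1 /eps2 !mulrBl => h1 h2; split; lra.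
have [d1 [d10 [Qd1 d1min]]] : exists d1, is_min_pos (scaled_interval_has_int eps1 eps2) d1.
  apply: min_exists; set c := (eps1 + eps2) / 2.
  have cp : 0 < c by rewrite /c; lra.
  have c1 : eps1 < c by rewrite /c; lra.
  have c2 : c < eps2 by rewrite /c; lra.
  have nq : (0 < numq c)%R by rewrite numq_gt0.
  exists `|numq c|%N; split; first by rewrite absz_gt0 gt_eqF.
  rewrite scaled_iff //; exists (denq c).
  have Ne : ((`|numq c|%N)%:R : rat) = c * (denq c)%:~R.
    by rewrite -numqE -[in RHS](gez0_abs (ltW nq)).
  have dq : (0 : rat) < (denq c)%:~R by rewrite ltr0z denq_gt0.
  rewrite Ne; split; nra.
have Q1 := Qd1; rewrite scaled_iff // in Q1; case: Q1 => n [hn1 hn2].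
have fge : (0 <= Num.floor (d1%:R / eps2)) by rewrite floor_ge0 divr_ge0 // ltW.
set k := `|Num.floor (d1%:R / eps2)|%N.
have Hk : (k%:Z) = Num.floor (d1%:R / eps2) by rewrite /k gez0_abs.
have kn : (k%:Z < n)%R.
  by rewrite Hk floor_lt_int ltr_pdivrMr.
have kn' : ((k.+1)%:R : rat) <= n%:~R.
  have : ((k.+1)%:Z <= n)%R by [].
  by rewrite -(ler_int rat).
have kd : (d1%:R : rat) < eps2 * (k.+1)%:R.
  have := floorD1_gt (d1%:R / eps2); rewrite -Hk.
  rewrite ltr_pdivrMr // mulrC.
  have -> : ((k%:Z + 1)%:~R : rat) = (k.+1)%:R by rewrite -natr1 rmorphD.
  by [].
have PD : has_frac_with_den r1 r2 k.+1.
  rewrite HP //; exists d1; split; last by [].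
  by nra.
have [dstar [ds0 [Pds dsmin]]] : exists d, is_min_pos (has_frac_with_den r1 r2) d.
  by apply: min_exists; exists k.+1.
have dsle := dsmin k.+1 (ltn0Sn k) PD.
have dsge : (k.+1 <= dstar)%N.
  have := Pds; rewrite HP // => -[m [hm1 hm2]].
  have dsp : (0 : rat) < dstar%:R by rewrite ltr0n.
  have mp : (0 < m)%R by rewrite -(ltr0z rat); nra.
  have Me : ((`|m|%N)%:R : rat) = m%:~R by rewrite -[in RHS](gez0_abs (ltW mp)).
  have Qm : scaled_interval_has_int eps1 eps2 `|m|%N.
    rewrite scaled_iff //; exists dstar%:Z; rewrite Me; split; rewrite -[(dstar%:Z)%:~R]/(dstar%:R : rat); lra.
  have d1m := d1min _ (ltac:(by rewrite absz_gt0 gt_eqF) : (0 < `|m|)%N) Qm.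
  have d1m' : (d1%:R : rat) <= m%:~R by rewrite -Me ler_nat.
  have : (k%:Z < dstar%:Z)%R.
    by rewrite Hk floor_lt_int ltr_pdivrMr //; rewrite -[(dstar%:Z)%:~R]/(dstar%:R : rat); nra.
  by rewrite ltz_nat.
have Eds : dstar = k.+1 by apply/eqP; rewrite eqn_leq dsle dsge.
exists dstar, d1; split; first by [].
split; first by [].
split; last by rewrite Eds -Hk -addn1 natz PoszD.
split; first by [].
split; first by rewrite inv_iff.
by move=> e e0; rewrite inv_iff //; apply: d1min.
Qed.
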